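(* Let $S$ be a group and $G,H$ subgroups of $S$ such that the cyclic $S$-acts $\overline{G}=S/G$ and $\overline{H}=S/H$ are geometrically equivalent. Then there exist $\alpha,\beta\in S$ such that $\alpha^{-1}G\alpha\subseteq H$ and $\beta^{-1}H\beta\subseteq G$.
   Context: A left $S$-act is a nonempty set with an action $S\times A\to A$ satisfying $1a=a$, $(st)a=s(ta)$; homomorphisms preserve the action. For a nonempty finite set $X$, $F_X=\coprod_{x\in X}S_x$ is the free $S$-act on $X$. For an $S$-act $G'$ and a relation $T\subseteq F_X\times F_X$, $T'_{G'}=\{\mu:F_X\to G' \text{ homomorphism}: T\subseteq\ker\mu\}$ and $T''_{G'}=\bigcap_{\mu\in T'_{G'}}\ker\mu$ (empty intersection $=F_X\times F_X$). $S$-acts $G_1,G_2$ are geometrically equivalent iff $T''_{G_1}=T''_{G_2}$ for all nonempty finite $X$ and all $T\subseteq F_X\times F_X$. For a subgroup $K$ of $S$, $\overline{K}=S/K$ is the $S$-act of left cosets with $s\cdot tK=stK$. *)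

(* Defs.v *)
From Stdlib Require Import List FunctionalExtensionality ProofIrrelevance.

Record Group := {
  gcar :> Type;
  gmul : gcar -> gcar -> gcar;
  gone : gcar;
  ginv : gcar -> gcar;
  gmulA : forall x y z, gmul x (gmul y z) = gmul (gmul x y) z;
  gmul1 : forall x, gmul gone x = x;
  gmulg1 : forall x, gmul x gone = x;
  gmulV : forall x, gmul (ginv x) x = gone;
  gmulgV : forall x, gmul x (ginv x) = gone }.
Arguments gmul {g}. Arguments gone {g}. Arguments ginv {g}.

Definition subgroup {S : Group} (K : S -> Prop) : Prop :=
  K gone /\ (forall x y, K x -> K y -> K (gmul x y)) /\ (forall x, K x -> K (ginv x)).

Record Act (S : Group) := {
  acar :> Type;
  aop : S -> acar -> acar;
  aop1 : forall a, aop gone a = a;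
  aopM : forall s t a, aop (gmul s t) a = aop s (aop t a);
  ainh : inhabited acar }.
Arguments aop {S a0} _ _ : rename.

Definition is_hom {S : Group} {A B : Act S} (f : A -> B) : Prop :=
  forall s a, f (aop s a) = aop s (f a).

(* Free S-act F_X = coprod_{x in X} S_x, represented as X * S with t.(x,s) = (x,ts). *)
Definition free_op {S : Group} (X : Type) (t : S) (p : X * S) : X * S :=
  (fst p, gmul t (snd p)).

Lemma free_op1 (S : Group) (X : Type) (p : X * S) : @free_op S X (@gone S) p = p.
Proof. destruct p; unfold free_op; simpl; rewrite gmul1; reflexivity. Qed.

Lemma free_opM (S : Group) (X : Type) s t (p : X * S) :
  @free_op S X (gmul s t) p = @free_op S X s (@free_op S X t p).
Proof. destruct p; unfold free_op; simpl; rewrite gmulA; reflexivity. Qed.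

Definition free_act (S : Group) {X : Type} (HX : inhabited X) : Act S.
Proof.
  refine {| acar := X * S; aop := @free_op S X;
            aop1 := @free_op1 S X; aopM := @free_opM S X |}.
  destruct HX as [x]; exact (inhabits (x, gone)).
Defined.

(* T''_{G'} = intersection of kernels of all homs F_X -> G' whose kernel contains T. *)
Definition Tpp {S : Group} {X : Type} (HX : inhabited X) (B : Act S)
    (T : X * S -> X * S -> Prop) (p q : X * S) : Prop :=
  forall mu : free_act S HX -> B, is_hom mu ->
    (forall a b, T a b -> mu a = mu b) -> mu p = mu q.

Definition finite_type (X : Type) : Prop := exists l : list X, forall x, In x l.

Definition geom_equiv {S : Group} (A B : Act S) : Prop :=
  forall (X : Type) (HX : inhabited X), finite_type X ->
  forall (T : X * S -> X * S -> Prop) (p q : X * S),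
    Tpp HX A T p q <-> Tpp HX B T p q.

(* Coset act S/K: left cosets tK = {u | t^{-1} u in K}, with s.(tK) = (st)K. *)
Definition coset {S : Group} (K : S -> Prop) : Type :=
  { C : S -> Prop | exists t : S, C = fun u => K (gmul (ginv t) u) }.

Lemma ginv_mul {S : Group} (s t : S) : ginv (gmul s t) = gmul (ginv t) (ginv s).
Proof.
  assert (e : gmul (gmul s t) (gmul (ginv t) (ginv s)) = gone).
  { rewrite <- gmulA, (gmulA S t), gmulgV, gmul1, gmulgV. reflexivity. }
  transitivity (gmul (ginv (gmul s t)) gone); [rewrite gmulg1; reflexivity|].
  rewrite <- e, gmulA, gmulV, gmul1. reflexivity.
Qed.

Lemma ginv1 (S : Group) : ginv (@gone S) = gone.
Proof. rewrite <- (gmul1 S (ginv gone)), gmulgV. reflexivity. Qed.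

Lemma coset_eq (S : Group) (K : S -> Prop) (C D : coset K) :
  proj1_sig C = proj1_sig D -> C = D.
Proof.
  destruct C as [C hC], D as [D hD]; simpl; intros e; subst D.
  f_equal; apply proof_irrelevance.
Qed.

Definition coset_op {S : Group} {K : S -> Prop} (s : S) (C : coset K) : coset K.
Proof.
  refine (exist _ (fun u => proj1_sig C (gmul (ginv s) u)) _).
  destruct C as [C [t ht]]; simpl. exists (gmul s t). subst C.
  apply functional_extensionality; intro u.
  rewrite ginv_mul, gmulA. reflexivity.
Defined.

Lemma coset_op1 (S : Group) (K : S -> Prop) (C : coset K) : coset_op gone C = C.
Proof.
  apply coset_eq; simpl. apply functional_extensionality; intro u.
  rewrite ginv1, gmul1. reflexivity.
Qed.

Lemma coset_opM (S : Group) (K : S -> Prop) s t (C : coset K) :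
  coset_op (gmul s t) C = coset_op s (coset_op t C).
Proof.
  apply coset_eq; simpl. apply functional_extensionality; intro u.
  rewrite ginv_mul, gmulA. reflexivity.
Qed.

Definition coset_base {S : Group} (K : S -> Prop) : coset K.
Proof.
  refine (exist _ K _). exists gone.
  apply functional_extensionality; intro u. rewrite ginv1, gmul1. reflexivity.
Defined.

Definition coset_act {S : Group} (K : S -> Prop) : Act S :=
  {| acar := coset K; aop := @coset_op S K; aop1 := @coset_op1 S K;
     aopM := @coset_opM S K; ainh := inhabits (coset_base K) |}.

(* Main.v *)
Require Import Defs.
From Stdlib Require Import List FunctionalExtensionality ProofIrrelevance Classical PropExtensionality.

Lemma ginvK (S : Group) (x : S) : ginv (ginv x) = x.
Proof.
  transitivity (gmul (ginv (ginv x)) (gmul (ginv x) x)).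
  - rewrite gmulV, gmulg1. reflexivity.
  - rewrite gmulA, gmulV, gmul1. reflexivity.
Qed.

Definition mu0 {S : Group} (K : S -> Prop) (p : unit * S) : coset_act K :=
  coset_op (snd p) (coset_base K).

Lemma mu0_hom {S : Group} (K : S -> Prop) :
  @is_hom S (free_act S (inhabits tt)) (coset_act K) (mu0 K).
Proof. intros s [x t]. unfold mu0; simpl. apply coset_opM. Qed.

Lemma fin_unit : finite_type unit.
Proof. exists (tt :: nil). intros []; simpl; auto. Qed.

Lemma all_of_Tpp {S : Group} (K : S -> Prop) T :
  subgroup K ->
  (forall s, Tpp (inhabits tt) (coset_act K) T (tt, gone) (tt, s)) ->
  (forall a b, T a b -> mu0 K a = mu0 K b) ->
  forall x, K x.
Proof.
  intros [K1 _] Hall Hk x.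
  specialize (Hall (ginv x) (mu0 K) (mu0_hom K) Hk).
  unfold mu0 in Hall; simpl in Hall.
  apply (f_equal (@proj1_sig _ _)) in Hall; simpl in Hall.
  apply (f_equal (fun f => f gone)) in Hall.
  rewrite !gmulg1, ginvK, ginv1 in Hall.
  rewrite <- Hall. exact K1.
Qed.

Lemma half (S : Group) (G H : S -> Prop) :
  subgroup G -> subgroup H ->
  geom_equiv (coset_act G) (coset_act H) ->
  exists alpha : S, forall g, G g -> H (gmul (gmul (ginv alpha) g) alpha).
Proof.
  intros sG sH E.
  set (T := fun a b : unit * S => exists g, G g /\ a = (tt, g) /\ b = (tt, gone)).
  assert (HkG : forall a b, T a b -> mu0 G a = mu0 G b).
  { intros a b [g [Gg [-> ->]]]. unfold mu0; simpl. apply coset_eq; simpl.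
    apply functional_extensionality; intro u. apply propositional_extensionality.
    rewrite ginv1, gmul1. destruct sG as [G1 [GM GI]]. split; intro h.
    - assert (eu : u = gmul g (gmul (ginv g) u))
        by (rewrite gmulA, gmulgV, gmul1; reflexivity).
      rewrite eu. apply GM; [exact Gg | exact h].
    - apply GM; [apply GI, Gg | exact h]. }
  destruct (classic (exists mu : free_act S (inhabits tt) -> coset_act H,
                        is_hom mu /\ forall a b, T a b -> mu a = mu b)) as [[mu [hm hk]]|nk].
  - destruct (mu (tt, gone)) as [C [c hc]] eqn:Emu.
    exists c. intros g Gg.
    assert (e : mu (tt, g) = mu (tt, gone)) by (apply hk; exists g; auto).
    assert (e2 : mu (tt, g) = coset_op g (mu (tt, gone))).
    { transitivity (mu (@free_op S unit g (tt, gone))).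
      - unfold free_op; simpl. rewrite gmulg1. reflexivity.
      - exact (hm g (tt, gone)). }
    rewrite e2, Emu in e.
    apply (f_equal (@proj1_sig _ _)) in e; simpl in e.
    apply (f_equal (fun f => f (gmul g c))) in e. subst C.
    rewrite (gmulA S (ginv g)), gmulV, gmul1, gmulV in e.
    rewrite <- gmulA. rewrite <- e. apply (proj1 sH).
  - assert (AllG : forall x, G x).
    { apply (all_of_Tpp G T sG); [|exact HkG]. intro s.
      apply (proj2 (E unit (inhabits tt) fin_unit T _ _)).
      intros mu hm hk. exfalso. apply nk. exists mu. auto. }
    assert (AllH : forall x, H x).
    { apply (all_of_Tpp H (fun _ _ => False) sH); [|intros a b []]. intro s.
      apply (proj1 (E unit (inhabits tt) fin_unit _ _ _)).
      intros mu _ _. destruct (mu (tt, gone)) as [C [c hc]], (mu (tt, s)) as [D [d hd]].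
      apply coset_eq; simpl. subst C D. apply functional_extensionality; intro u.
      apply propositional_extensionality. split; intros; apply AllG. }
    exists gone. intros; apply AllH.
Qed.

Theorem proposition3p9 (S : Group) (G H : S -> Prop) :
  subgroup G -> subgroup H ->
  geom_equiv (coset_act G) (coset_act H) ->
  exists alpha beta : S,
    (forall g, G g -> H (gmul (gmul (ginv alpha) g) alpha)) /\
    (forall h, H h -> G (gmul (gmul (ginv beta) h) beta)).
Proof.
  intros sG sH E.
  destruct (half S G H sG sH E) as [a ha].
  destruct (half S H G sH sG) as [b hb].
  { intros X HX F T p q. symmetry. apply E; auto. }
  exists a, b. auto.
Qed.
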